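(* Let $p\ge 1$, let $\Theta_{s,a}\subseteq\mathbb{R}^p$ be a set of vectors, and let $\{P_\beta,\ \beta\in\Theta_{s,a}\}$ be a family of probability distributions on a measurable space $(\mathcal{X},\mathcal{U})$ (extended to the support of the prior below); an observation $Y$ is drawn from $P_\beta$ and $\mathbf{E}_\beta$ denotes expectation with respect to $P_\beta$. For any $s<p$, $q\ge 1$ and any probability measure $\pi$ on $\mathbb{R}^p$ (with $\pi(\beta\in\Theta_{s,a})>0$), there exists $C_q>0$ such that $$\inf_{\hat\beta}\sup_{\beta\in\Theta_{s,a}}\mathbf{E}_\beta\|\hat\beta-\beta\|_q^q\ \ge\ \inf_{\hat T}\mathbb{E}_\pi\mathbf{E}_\beta\sum_{j=1}^p|\hat T_j(Y)-\beta_j|^q\ -\ C_q\,\mathbb{E}_\pi\Big[\big(\mathbf{E}(\|\beta^A\|_q^q\mid Y)+\|\beta\|_q^q\big)\mathbf{1}(\beta\notin\Theta_{s,a})\Big],$$ where $\beta^A:=\beta\,\mathbf{1}(\beta\in\Theta_{s,a})=(\beta_1\mathbf{1}(\beta\in\Theta_{s,a}),\dots,\beta_p\mathbf{1}(\beta\in\Theta_{s,a}))$, $\inf_{\hat\beta}$ is the infimum over all estimators, and $\inf_{\hat T}$ is the infimum over all estimators $\hat T(Y)=(\hat T_1(Y),\dots,\hat T_p(Y))$ with values in $\mathbb{R}^p$.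
   Context: $\mathbb{E}_\pi$ denotes expectation with respect to $\beta\sim\pi$ (and $\mathbb{E}_\pi\mathbf{E}_\beta$ the expectation under the joint law where $\beta\sim\pi$ and, given $\beta$, $Y\sim P_\beta$). $\mathbf{E}(\|\beta^A\|_q^q\mid Y)$ denotes the conditional expectation of $\|\beta^A\|_q^q$ given $Y$ when $\beta$ is distributed according to $\pi$ conditioned on the event $\{\beta\in\Theta_{s,a}\}$ and $Y\sim P_\beta$. $\|x\|_q$ is the $\ell_q$ norm. *)

(* Defs.v *)
From HB Require Import structures.
From mathcomp Require Import all_boot all_order all_algebra.
From mathcomp Require Import all_classical all_reals all_analysis.
From mathcomp Require Import measurable_realfun.
Set Implicit Arguments. Unset Strict Implicit. Unset Printing Implicit Defensive.
Import Order.TTheory GRing.Theory Num.Theory.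
Local Open Scope classical_set_scope.
Local Open Scope ring_scope.
Local Open Scope ereal_scope.

(* R^p is modelled as p.-tuple R with the product sigma-algebra. *)

Definition lqq (R : realType) (p : nat) (q : R) (x : p.-tuple R) : \bar R :=
  (\sum_(j < p) (`| tnth x j | `^ q))%R%:E.

Definition vsub (R : realType) (p : nat) (u v : p.-tuple R) : p.-tuple R :=
  [tuple (tnth u j - tnth v j)%R | j < p].

Definition betaA (R : realType) (p : nat) (Theta : set (p.-tuple R))
  (b : p.-tuple R) : p.-tuple R :=
  [tuple (tnth b j * \1_Theta b)%R | j < p].

Definition estimators (R : realType) (p : nat) (dX : measure_display)
  (X : measurableType dX) : set (X -> p.-tuple R) :=
  [set f | measurable_fun [set: X] f].

(* Expectation under the joint law where beta ~ pi conditioned on Theta and,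
   given beta, Y ~ P beta :  E_{pi|Theta} E_beta [ f beta Y ]. *)
Definition condA_expect (R : realType) (p : nat) (dX : measure_display)
  (X : measurableType dX) (Theta : set (p.-tuple R))
  (P : R.-pker (p.-tuple R) ~> X) (pi : probability (p.-tuple R) R)
  (f : p.-tuple R -> X -> \bar R) : \bar R :=
  (\int[pi]_b ((\1_Theta b)%:E * \int[P b]_y f b y)) * ((fine (pi Theta))^-1)%:E.

(* g is a (nonnegative, measurable) version of E(||beta^A||_q^q | Y) under the
   joint law above: for every measurable B,
   E[1_B(Y) g(Y)] = E[1_B(Y) ||beta^A||_q^q]. *)
Definition is_cond_exp_betaA (R : realType) (p : nat) (dX : measure_display)
  (X : measurableType dX) (Theta : set (p.-tuple R))
  (P : R.-pker (p.-tuple R) ~> X) (pi : probability (p.-tuple R) R) (q : R)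
  (g : X -> \bar R) : Prop :=
  measurable_fun [set: X] g /\ (forall y, 0 <= g y) /\
  forall B : set X, measurable B ->
    condA_expect Theta P pi (fun _ y => (\1_B y)%:E * g y)
    = condA_expect Theta P pi (fun b y => (\1_B y)%:E * lqq q (betaA Theta b)).

(* Main.v *)
Require Import Defs.
From HB Require Import structures.
From mathcomp Require Import all_boot all_order all_algebra.
From mathcomp Require Import all_classical all_reals all_analysis.
From mathcomp Require Import measurable_realfun.
From mathcomp Require Import lra.
Import Order.TTheory GRing.Theory Num.Theory.
Local Open Scope classical_set_scope.
Local Open Scope ring_scope.
Local Open Scope ereal_scope.

Set Implicit Arguments. Unset Strict Implicit.



Section Helpers.
Context (R : realType) (p : nat) (dX : measure_display) (X : measurableType dX)
  (P : R.-pker (p.-tuple R) ~> X) (pi : probability (p.-tuple R) R).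

Definition II (f : p.-tuple R * X -> \bar R) :=
  \int[pi]_b \int[P b]_y f (b, y).

Lemma mII f : (forall z, 0 <= f z) -> measurable_fun setT f ->
  measurable_fun setT (fun b => \int[P b]_y f (b, y)).
Proof. by move=> f0 mf; exact: (measurable_fun_integral_finite_kernel f P). Qed.

Lemma mpair2 (f : p.-tuple R * X -> \bar R) b :
  measurable_fun setT f -> measurable_fun setT (fun y => f (b, y)).
Proof. by move=> mf; exact: measurable_fun_pair2. Qed.

Lemma IID f1 f2 : (forall z, 0 <= f1 z) -> measurable_fun setT f1 ->
  (forall z, 0 <= f2 z) -> measurable_fun setT f2 ->
  II (fun z => f1 z + f2 z) = II f1 + II f2.
Proof.
move=> f10 mf1 f20 mf2; rewrite /II.
rewrite (eq_integral (fun b => \int[P b]_y f1 (b, y) + \int[P b]_y f2 (b, y))); last first.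
  by move=> b _; apply: ge0_integralD => //; exact: mpair2.
apply: ge0_integralD => //.
- by move=> b _; apply: integral_ge0.
- exact: mII.
- by move=> b _; apply: integral_ge0.
- exact: mII.
Qed.

Lemma IIle f1 f2 : (forall z, 0 <= f1 z) -> measurable_fun setT f1 ->
  measurable_fun setT f2 -> (forall z, f1 z <= f2 z) -> II f1 <= II f2.
Proof.
move=> f10 mf1 mf2 f12; rewrite /II.
have f20 z : 0 <= f2 z by apply: le_trans (f12 z).
apply: ge0_le_integral => //.
- by move=> b _; apply: integral_ge0.
- exact: mII.
- exact: mII.
- by move=> b _; apply: ge0_le_integral => //; [exact: mpair2..].
Qed.

Lemma IIZ c f : (0 <= c)%R -> (forall z, 0 <= f z) -> measurable_fun setT f ->
  II (fun z => c%:E * f z) = c%:E * II f.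
Proof.
move=> c0 f0 mf; rewrite /II.
rewrite (eq_integral (fun b => c%:E * \int[P b]_y f (b, y))); last first.
  by move=> b _; apply: ge0_integralZl => //; exact: mpair2.
rewrite ge0_integralZl//; first exact: mII.
by move=> b _; apply: integral_ge0.
Qed.

Lemma II_cst c : II (fun _ => c%:E) = c%:E.
Proof.
rewrite /II.
under eq_integral do rewrite (integral_cst _ measurableT) prob_kernel mule1.
rewrite (integral_cst _ measurableT) [X in _ * X](_ : _ = 1) ?mule1 //; exact: probability_setT.
Qed.

Lemma II_mc (fn : nat -> p.-tuple R * X -> \bar R) :
  (forall n z, 0 <= fn n z) -> (forall n, measurable_fun setT (fn n)) ->
  (forall z, nondecreasing_seq (fn ^~ z)) ->
  II (fun z => limn (fn ^~ z)) = limn (fun n => II (fn n)).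
Proof.
move=> f0 mf nd; rewrite /II.
rewrite (eq_integral (fun b => limn (fun n => \int[P b]_y fn n (b, y)))); last first.
  move=> b _.
  have := (@monotone_convergence _ _ _ (P b) _ measurableT (fun n y => fn n (b, y)) (fun n => @mpair2 _ b (mf n))
     (fun n y _ => f0 n (b,y)) (fun y _ => nd (b,y))).
  move=> ->. done.
have h0 : forall n b, [set: p.-tuple R] b -> 0 <= \int[P b]_y fn n (b, y).
  by move=> n b _; apply: integral_ge0.
have hnd : forall b, [set: p.-tuple R] b -> nondecreasing_seq (fun n => \int[P b]_y fn n (b, y)).
  move=> b _ m n mn; apply: ge0_le_integral => //; [exact: mpair2..|].
  by move=> y _; exact: nd.
have := (@monotone_convergence _ _ _ pi _ measurableT (fun n b => \int[P b]_y fn n (b, y)) (fun n => @mII _ (f0 n) (mf n)) h0 hnd).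
by move=> ->.
Qed.
End Helpers.



Section Ineq.
Context (R : realType) (p : nat) (q : R) (hq : (1 <= q)%R).

Lemma powq_le2 (x m : R) : (0 <= x)%R -> (0 <= m)%R -> (x <= 2 * m)%R ->
  (x `^ q <= 2 `^ q * m `^ q)%R.
Proof.
move=> x0 m0 xm; rewrite -powRM //.
apply: ge0_ler_powR => //; first by apply: le_trans hq.
by rewrite nnegrE; apply: mulr_ge0.
Qed.

Lemma powq_tri (a b : R) :
  (`|a - b| `^ q <= 2 `^ q * (`|a| `^ q + `|b| `^ q))%R.
Proof.
have hab : (`|a - b| <= `|a| + `|b|)%R by apply: ler_normB.
have [h|h] := (leP `|a| `|b|)%R.
- apply: (le_trans (@powq_le2 (`|a - b|)%R (`|b|)%R _ _ _)) => //.
  + by apply: (le_trans hab); lra.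
  + by rewrite ler_wpM2l ?powR_ge0 // lerDr powR_ge0.
- apply: (le_trans (@powq_le2 (`|a - b|)%R (`|a|)%R _ _ _)) => //.
  + by apply: (le_trans hab); lra.
  + by rewrite ler_wpM2l ?powR_ge0 // lerDl powR_ge0.
Qed.

Lemma lqq_ge0 (u : p.-tuple R) : 0 <= lqq q u.
Proof. by rewrite /lqq lee_fin; apply: sumr_ge0 => j _; apply: powR_ge0. Qed.

Lemma lqq_tri (u v : p.-tuple R) :
  lqq q (vsub u v) <= (2 `^ q)%:E * (lqq q u + lqq q v).
Proof.
rewrite /lqq -EFinD -EFinM lee_fin -big_split mulr_sumr; apply: ler_sum => j _.
by rewrite tnth_mktuple; apply: powq_tri.
Qed.

Lemma lqq_tri' (u v : p.-tuple R) :
  lqq q u <= (2 `^ q)%:E * (lqq q (vsub u v) + lqq q v).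
Proof.
rewrite /lqq -EFinD -EFinM lee_fin -big_split mulr_sumr; apply: ler_sum => j _.
rewrite tnth_mktuple; have := powq_tri (tnth u j - tnth v j) (- tnth v j).
by rewrite opprK subrK normrN.
Qed.

Lemma lqq_sub0 (v : p.-tuple R) : lqq q (vsub [tuple (0%R:R) | _ < p] v) = lqq q v.
Proof.
rewrite /lqq; congr (_%:E); apply: eq_bigr => j _.
by rewrite !tnth_mktuple sub0r normrN.
Qed.

Lemma lqq0 : lqq q [tuple (0%R:R) | _ < p] = 0.
Proof.
rewrite /lqq (eq_bigr (fun _ => 0%R)) ?big1 // => j _.
rewrite tnth_mktuple normr0 powR0 //; apply/eqP => q0.
by move: hq; rewrite q0 ler10.
Qed.

Lemma mlqq : measurable_fun setT (lqq q : p.-tuple R -> \bar R).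
Proof.
rewrite (_ : lqq q = EFin \o (fun x : p.-tuple R => \sum_(j < p) `|tnth x j| `^ q)%R) //.
apply/measurable_EFinP; apply: measurable_sum => j.
exact: (measurableT_comp (measurable_powR q) (measurableT_comp (@normr_measurable R setT) (measurable_tnth j))).
Qed.

Lemma mvsub dT (T : measurableType dT) (f g : T -> p.-tuple R) :
  measurable_fun setT f -> measurable_fun setT g ->
  measurable_fun setT (fun x => vsub (f x) (g x)).
Proof.
move=> mf mg; apply/measurable_fun_tnthP => j /=.
rewrite (_ : _ \o _ = fun x => tnth (f x) j - tnth (g x) j)%R; last first.
  by apply/funext => x /=; rewrite tnth_mktuple.
apply: measurable_funB.
- exact: measurableT_comp (measurable_tnth j) mf.
- exact: measurableT_comp (measurable_tnth j) mg.
Qed.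

End Ineq.



Section Meas.
Context (R : realType) (p : nat) (dX : measure_display) (X : measurableType dX).

Lemma mfst (f : p.-tuple R -> \bar R) : measurable_fun setT f ->
  measurable_fun setT (fun z : p.-tuple R * X => f z.1).
Proof. by move=> mf; exact: measurableT_comp mf measurable_fst. Qed.

Lemma msnd (f : X -> \bar R) : measurable_fun setT f ->
  measurable_fun setT (fun z : p.-tuple R * X => f z.2).
Proof. by move=> mf; exact: measurableT_comp mf measurable_snd. Qed.

Lemma mindE dT (T : measurableType dT) (A : set T) : measurable A ->
  measurable_fun setT (fun x => (\1_A x)%:E : \bar R).
Proof.
move=> mA; apply/(measurable_EFinP (T:=T)).
exact: measurable_indic.
Qed.

Lemma mM dT (T : measurableType dT) (f h : T -> \bar R) :
  measurable_fun setT f -> measurable_fun setT h ->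
  measurable_fun setT (fun x => f x * h x).
Proof. by move=> mf mh; exact: emeasurable_funM. Qed.

Lemma mD dT (T : measurableType dT) (f h : T -> \bar R) :
  measurable_fun setT f -> measurable_fun setT h ->
  measurable_fun setT (fun x => f x + h x).
Proof. by move=> mf mh; exact: emeasurable_funD. Qed.

Lemma ind_ge0 (T : Type) (A : set T) x : 0 <= (\1_A x)%:E :> \bar R.
Proof. by rewrite lee_fin. Qed.

End Meas.

Section Cond.
Context (R : realType) (p : nat) (dX : measure_display) (X : measurableType dX)
  (Theta : set (p.-tuple R)) (mTheta : measurable Theta)
  (P : R.-pker (p.-tuple R) ~> X) (pi : probability (p.-tuple R) R)
  (hpi : 0%:E < pi Theta) (q : R) (hq : (1 <= q)%R).

Lemma condA_II f : condA_expect Theta P pi f =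
  II P pi (fun z => (\1_Theta z.1)%:E * f z.1 z.2) * ((fine (pi Theta))^-1)%:E.
Proof.
rewrite /condA_expect /II; congr (_ * _); apply: eq_integral => b _ /=.
rewrite indicE; case: (boolP (b \in Theta)) => hb /=.
  by rewrite mul1e; apply: eq_integral => y _; rewrite mul1e.
by rewrite mul0e; apply/esym/integral0_eq => y _; rewrite mul0e.
Qed.

Lemma fpiT : (0 < fine (pi Theta))%R.
Proof.
apply: fine_gt0; rewrite hpi /=.
by apply: (le_lt_trans (probability_le1 pi mTheta)); rewrite ltey.
Qed.

Lemma cancel_c x y : x * ((fine (pi Theta))^-1)%:E = y * ((fine (pi Theta))^-1)%:E ->
  x = y.
Proof.
move=> h; have := congr1 (fun t => t * (fine (pi Theta))%:E) h.
rewrite -!muleA -!EFinM mulVf ?mule1 //; exact: lt0r_neq0 fpiT.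
Qed.

Lemma betaA_in b : b \in Theta -> betaA Theta b = b.
Proof.
move=> hb; apply: eq_from_tnth => j.
by rewrite tnth_mktuple indicE hb mulr1.
Qed.

Lemma hgB (g : X -> \bar R) : is_cond_exp_betaA Theta P pi q g ->
  forall A, measurable A ->
  II P pi (fun z => (\1_Theta z.1)%:E * ((\1_A z.2)%:E * g z.2)) =
  II P pi (fun z => (\1_Theta z.1)%:E * ((\1_A z.2)%:E * lqq q z.1)).
Proof.
move=> [mg [g0 hg]] A mA; have := hg A mA; rewrite !condA_II => /cancel_c ->.
congr II; apply/funext => -[b y] /=.
rewrite indicE; case: (boolP (b \in Theta)) => hb /=.
  by rewrite betaA_in.
by rewrite !mul0e.
Qed.

End Cond.



Section Core.
Context (R : realType) (p : nat) (dX : measure_display) (X : measurableType dX)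
  (Theta : set (p.-tuple R)) (mTheta : measurable Theta)
  (P : R.-pker (p.-tuple R) ~> X) (pi : probability (p.-tuple R) R)
  (hpi : 0%:E < pi Theta) (q : R) (hq : (1 <= q)%R)
  (g : X -> \bar R) (hg : is_cond_exp_betaA Theta P pi q g)
  (bh : X -> p.-tuple R) (mbh : measurable_fun setT bh).

Definition cq : R := 2 `^ q.
Lemma cq_gt0 : (0 < cq)%R. Proof. by apply: powR_gt0. Qed.

Definition Bset := [set y | ((2 * cq)%:E * g y < lqq q (bh y))].

Lemma mg : measurable_fun setT g. Proof. by case: hg. Qed.
Lemma g0 y : 0 <= g y. Proof. by case: hg => _ [+ _]. Qed.

Lemma mB : measurable Bset.
Proof.
have := measurable_lte measurableT (measurable_funeM (2 * cq)%:E mg)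
  (measurableT_comp (@mlqq R p q) mbh).
by rewrite setTI.
Qed.

Lemma PB y b : Bset y ->
  g y \is a fin_num /\ 2%:E * g y <= lqq q (vsub (bh y) b) + lqq q b.
Proof.
rewrite /Bset /=; case E: (g y) => [r| |] hy.
- split => //.
  have := lqq_tri' hq (bh y) b.
  move: hy; rewrite /lqq -!EFinD -!EFinM !lte_fin !lee_fin => h1 h2.
  have h3 := lt_le_trans h1 h2.
  rewrite -mulrA mulrCA /cq in h3.
  by move/ltW: (h3); rewrite ler_pM2l ?powR_gt0.
- by move: hy; rewrite gt0_muley ?lte_fin ?mulr_gt0 ?cq_gt0 // /lqq ltNge leey.
- by have := g0 y; rewrite E.
Qed.


Definition Gf (z : p.-tuple R * X) := lqq q (vsub (bh z.2) z.1).

Lemma mGf : measurable_fun setT Gf.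
Proof.
apply: (measurableT_comp (@mlqq R p q)).
exact: (mvsub (measurableT_comp mbh measurable_snd) measurable_fst).
Qed.

Lemma Gf_ge0 z : 0 <= Gf z. Proof. exact: lqq_ge0. Qed.

Definition Bn (n : nat) := Bset `&` [set y | g y <= n%:R%:E].

Lemma mBn n : measurable (Bn n).
Proof.
apply: measurableI; first exact: mB.
have := measurable_lee measurableT mg (measurable_cst (n%:R%:E : \bar R)).
by rewrite setTI.
Qed.

Lemma II_ge0 f : (forall z, 0 <= f z) -> 0 <= II P pi f.
Proof. by move=> f0; apply: integral_ge0 => b _; apply: integral_ge0. Qed.

Lemma mIBf A (f : p.-tuple R * X -> \bar R) : measurable A -> measurable_fun setT f ->
  measurable_fun setT (fun z : p.-tuple R * X => (\1_Theta z.1)%:E * ((\1_A z.2)%:E * f z)).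
Proof.
move=> mA mf; apply: mM; first exact: (mfst (mindE mTheta)).
by apply: mM => //; exact: (msnd (mindE mA)).
Qed.

Lemma IBf_ge0 (A : set X) (f : p.-tuple R * X -> \bar R) : (forall z, 0 <= f z) -> forall z : p.-tuple R * X,
  0 <= (\1_Theta z.1)%:E * ((\1_A z.2)%:E * f z).
Proof. by move=> f0 z; rewrite !mule_ge0 // lee_fin. Qed.

Definition an n := II P pi (fun z => (\1_Theta z.1)%:E * ((\1_(Bn n) z.2)%:E * g z.2)).

Lemma an_eq n : an n =
  II P pi (fun z => (\1_Theta z.1)%:E * ((\1_(Bn n) z.2)%:E * lqq q z.1)).
Proof. exact: (hgB mTheta hpi hg (mBn n)). Qed.

Lemma an_fin n : an n \is a fin_num.
Proof.
rewrite ge0_fin_numE; last by apply: II_ge0; apply: IBf_ge0 => z; exact: g0.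
apply: (le_lt_trans (y := n%:R%:E)); last by rewrite ltey.
rewrite -(II_cst P pi (n%:R)); apply: IIle.
- by apply: IBf_ge0 => z; exact: g0.
- by apply: mIBf; [exact: mBn | exact: msnd mg].
- exact: measurable_cst.
- move=> [b y] /=; rewrite !indicE.
  case: (boolP (b \in Theta)) => hb; last by rewrite mul0e lee_fin.
  case: (boolP (y \in Bn n)) => hy; last by rewrite mul0e mule0 lee_fin.
  by rewrite !mul1e; move/set_mem: hy => [].
Qed.

Lemma an_le n : an n <=
  II P pi (fun z => (\1_Theta z.1)%:E * ((\1_(Bn n) z.2)%:E * Gf z)).
Proof.
set Y := II P pi _.
have Y0 : 0 <= Y by apply: II_ge0; apply: IBf_ge0; exact: Gf_ge0.
have h2 : 2%:E * an n <= Y + an n.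
  rewrite {2}an_eq /an -IIZ //; last 2 first.
  - by apply: IBf_ge0 => z; exact: g0.
  - by apply: mIBf; [exact: mBn | exact: msnd mg].
  rewrite -IID //; last 4 first.
  - by apply: IBf_ge0; exact: Gf_ge0.
  - by apply: mIBf; [exact: mBn | exact: mGf].
  - by apply: IBf_ge0 => z; exact: lqq_ge0.
  - by apply: mIBf; [exact: mBn | exact: (@mfst R p dX X (lqq q) (@mlqq R p q))].
  apply: IIle.
  - by move=> z; rewrite !mule_ge0 // ?lee_fin // g0.
  - apply: measurable_funeM.
    by apply: mIBf; [exact: mBn | exact: msnd mg].
  - apply: mD; (apply: mIBf; [exact: mBn|]); [exact: mGf | exact: (@mfst R p dX X (lqq q) (@mlqq R p q))].
  - move=> [b y] /=; rewrite !indicE.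
    case: (boolP (b \in Theta)) => hb; last by rewrite !mul0e mule0 adde0.
    case: (boolP (y \in Bn n)) => hy; last by rewrite !mul0e !mule0 adde0.
    rewrite !mul1e; move/set_mem: hy => [hyB _].
    by have [_ ->] := PB b hyB.
have := an_fin n; rewrite fin_numE => /andP[/eqP hNy /eqP hy].
move: h2 Y0; case: (an n) hNy hy => [a| |] // _ _.
case: Y => [y| |] // h _; last by rewrite leey.
by move: h; rewrite -EFinM -EFinD !lee_fin => h; lra.
Qed.

Lemma Bn_sub m n : (m <= n)%N -> forall y, y \in Bn m -> y \in Bn n.
Proof.
move=> mn y /set_mem [hB hg']; apply/mem_set; split => //.
by apply: (le_trans hg'); rewrite lee_fin ler_nat.
Qed.

Lemma Bn_B n y : y \in Bn n -> y \in Bset.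
Proof. by move=> /set_mem [hB _]; exact/mem_set. Qed.

Lemma ind_le (A B : set X) y : (y \in A -> y \in B) ->
  forall (c : \bar R) f, 0 <= c -> 0 <= f ->
  c * ((\1_A y)%:E * f) <= c * ((\1_B y)%:E * f).
Proof.
move=> AB c f c0 f0; apply: lee_wpmul2l => //; rewrite !indicE.
case: (boolP (y \in A)) => hA; first by rewrite (AB hA).
by rewrite mul0e; apply: mule_ge0 => //; rewrite lee_fin.
Qed.

Lemma pt_lim b y : (\1_Theta b)%:E * ((\1_Bset y)%:E * g y) =
  limn (fun n => (\1_Theta b)%:E * ((\1_(Bn n) y)%:E * g y)).
Proof.
case: (boolP (y \in Bset)) => hy.
- have [gfin _] := PB b (set_mem hy).
  set r := fine (g y); have gy : g y = r%:E by rewrite fineK.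
  apply/esym/cvg_lim => //; apply: cvg_near_cst.
  exists (Num.truncn `|r|).+1 => // n /= hn.
  have hyn : y \in Bn n.
    apply/mem_set; split; first exact/set_mem.
    rewrite /= gy lee_fin; apply: (le_trans (ler_norm r)).
    apply/ltW/(lt_le_trans (Num.Theory.truncnS_gt _)).
    by rewrite ler_nat.
  by rewrite !indicE hyn hy.
- have hyn n : (y \in Bn n) = false.
    by apply/negbTE; apply: contra hy; exact: Bn_B.
  rewrite (_ : (fun n => _) = fun _ => 0).
    by rewrite lim_cst // !indicE (negbTE hy) mul0e mule0.
  by apply/funext => n; rewrite [X in _ * (X%:E * _)]indicE hyn mul0e mule0.
Qed.

Lemma CL : II P pi (fun z => (\1_Theta z.1)%:E * ((\1_Bset z.2)%:E * lqq q z.1)) <=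
  II P pi (fun z => (\1_Theta z.1)%:E * ((\1_Bset z.2)%:E * Gf z)).
Proof.
rewrite -(hgB mTheta hpi hg mB).
rewrite (_ : (fun z => _) = (fun z => limn (fun n =>
   (\1_Theta z.1)%:E * ((\1_(Bn n) z.2)%:E * g z.2)))); last first.
  by apply/funext => -[b y]; exact: pt_lim.
rewrite II_mc; last 3 first.
- by move=> n; apply: IBf_ge0 => z; exact: g0.
- by move=> n; apply: mIBf; [exact: mBn | exact: msnd mg].
- move=> [b y] m n mn /=; apply: ind_le; [exact: Bn_sub | by rewrite lee_fin | exact: g0].
apply: lime_le.
- apply: ereal_nondecreasing_is_cvgn => m n mn; apply: IIle.
  + by apply: IBf_ge0 => z; exact: g0.
  + by apply: mIBf; [exact: mBn | exact: msnd mg].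
  + by apply: mIBf; [exact: mBn | exact: msnd mg].
  + move=> [b y] /=; apply: ind_le; [exact: Bn_sub | by rewrite lee_fin | exact: g0].
- apply: nearW => n; apply: (le_trans (an_le n)); apply: IIle.
  + by apply: IBf_ge0; exact: Gf_ge0.
  + by apply: mIBf; [exact: mBn | exact: mGf].
  + by apply: mIBf; [exact: mB | exact: mGf].
  + move=> [b y] /=; apply: ind_le; [exact: Bn_B | by rewrite lee_fin | exact: Gf_ge0].
Qed.

End Core.




Section Final.
Context (R : realType) (p : nat) (dX : measure_display) (X : measurableType dX)
  (Theta : set (p.-tuple R)) (mTheta : measurable Theta)
  (P : R.-pker (p.-tuple R) ~> X) (pi : probability (p.-tuple R) R)
  (hpi : 0%:E < pi Theta) (q : R) (hq : (1 <= q)%R)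
  (g : X -> \bar R) (hg : is_cond_exp_betaA Theta P pi q g)
  (bh : X -> p.-tuple R) (mbh : measurable_fun setT bh).

Definition Tf (y : X) : p.-tuple R :=
  [tuple (tnth (bh y) j * \1_(~` Bset q g bh) y)%R | j < p].

Lemma mTf : measurable_fun setT Tf.
Proof.
apply/measurable_fun_tnthP => j.
rewrite (_ : _ \o _ = fun y => tnth (bh y) j * \1_(~` Bset q g bh) y)%R; last first.
  by apply/funext => y /=; rewrite tnth_mktuple.
apply: measurable_funM; first exact: measurableT_comp (measurable_tnth j) mbh.
apply: measurable_indic; apply: measurableC; exact: (@mB _ _ _ _ Theta P pi q g hg bh mbh).
Qed.

Definition Ff (z : p.-tuple R * X) := lqq q (vsub (Tf z.2) z.1).

Lemma mFf : measurable_fun setT Ff.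
Proof.
apply: (measurableT_comp (@mlqq R p q)).
exact: (mvsub (measurableT_comp mTf measurable_snd) measurable_fst).
Qed.

Lemma Tf_in y : y \in Bset q g bh -> forall b, Ff (b, y) = lqq q b.
Proof.
move=> hy b; rewrite /Ff /lqq; congr EFin; apply: eq_bigr => j _.
by rewrite !tnth_mktuple indicE in_setC hy /= mulr0 sub0r normrN.
Qed.

Lemma Tf_out y : y \notin Bset q g bh -> Tf y = bh y.
Proof.
move=> hy; apply: eq_from_tnth => j.
by rewrite tnth_mktuple indicE in_setC hy /= mulr1.
Qed.

Lemma notinB y : y \notin Bset q g bh -> lqq q (bh y) <= (2 * cq q)%:E * g y.
Proof.
move=> hy; rewrite leNgt; apply/negP => h; move/negP: hy; apply.
exact/mem_set.
Qed.

Lemma lqq_Tf y : lqq q (Tf y) <= (2 * cq q)%:E * g y.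
Proof.
case: (boolP (y \in Bset q g bh)) => hy; last by rewrite Tf_out //; exact: notinB.
apply: (le_trans (y := 0)); last first.
  by apply: mule_ge0; [rewrite lee_fin; apply/ltW/mulr_gt0 => //; exact: cq_gt0 | exact: (g0 hg)].
rewrite /lqq lee_fin (eq_bigr (fun _ => 0%R)) ?big1 // => j _.
rewrite tnth_mktuple indicE in_setC hy /= mulr0 normr0 powR0 //; apply/eqP => q0.
by move: hq; rewrite q0 ler10.
Qed.

Definition CC : R := cq q * (2 * cq q).

Lemma cq_ge1 : (1 <= cq q)%R.
Proof.
rewrite /cq -[X in (X <= _)%R](powRr0 2); apply: ler_powR; first by rewrite ler1n.
by apply: le_trans hq.
Qed.

Lemma F2_pt b y : (\1_(~` Theta) b)%:E * Ff (b, y) <=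
  CC%:E * ((g y + lqq q b) * (\1_(~` Theta) b)%:E).
Proof.
rewrite !indicE; case: (b \in ~` Theta) => /=; last first.
  by rewrite mul0e mule0 mule0.
rewrite mul1e mule1.
have h1 := lqq_tri hq (Tf y) b.
have h2 := lqq_Tf y.
have hc := cq_ge1.
have g0y := g0 hg y.
have lb := lqq_ge0 q b.
have lt := lqq_ge0 q (Tf y).
apply: (le_trans h1).
move: h2 g0y lb lt; rewrite /CC /lqq.
case: (g y) => [r| |] //; last first.
  by move=> *; rewrite addye // gt0_muley ?leey // lte_fin mulr_gt0 // ?mulr_gt0 // cq_gt0.
rewrite -!EFinD -!EFinM !lee_fin => h2 r0 lb lt.
set L := (\sum_(j < p) _)%R in lb *.
set Ty := (\sum_(j < p) _)%R in h2 lt *.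
have e : (cq q * (Ty + L) <= cq q * (2 * cq q * r + L))%R.
  by rewrite ler_wpM2l ?lerD2r //; apply: le_trans hc.
apply: (le_trans e).
have : (cq q * L <= cq q * (2 * cq q) * L)%R.
  rewrite ler_wpM2r // ler_peMr //; first by apply: le_trans hc.
  by apply: le_trans (hc) _; rewrite ler_peMl //; [apply: le_trans hc | lra].
move=> h; nra.
Qed.

Lemma IIDle (f1 f2 h1 : p.-tuple R * X -> \bar R) :
  (forall z, 0 <= f1 z) -> measurable_fun setT f1 ->
  (forall z, 0 <= f2 z) -> measurable_fun setT f2 ->
  (forall z, 0 <= h1 z) -> measurable_fun setT h1 ->
  II P pi f1 <= II P pi h1 ->
  II P pi (fun z => f1 z + f2 z) <= II P pi (fun z => h1 z + f2 z).
Proof.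
move=> f10 mf1 f20 mf2 h10 mh1 le1.
rewrite (IID P pi f10 mf1 f20 mf2) (IID P pi h10 mh1 f20 mf2).
exact: leeD2r.
Qed.

Lemma F1_le : II P pi (fun z => (\1_Theta z.1)%:E * Ff z) <=
  II P pi (fun z => (\1_Theta z.1)%:E * Gf q bh z).
Proof.
have mBs := @mB _ _ _ _ Theta P pi q g hg bh mbh.
have ml := @mlqq R p q.
rewrite (_ : (fun z => _ * Ff z) = fun z =>
  (\1_Theta z.1)%:E * ((\1_(Bset q g bh) z.2)%:E * lqq q z.1) +
  (\1_Theta z.1)%:E * ((\1_(~` Bset q g bh) z.2)%:E * Gf q bh z)); last first.
  apply/funext => -[b y] /=; rewrite [X in _ = _ * (X%:E * _) + _]indicE.
  rewrite [X in _ = _ + _ * (X%:E * _)]indicE in_setC.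
  case: (boolP (y \in Bset q g bh)) => hy /=.
    by rewrite Tf_in // mul1e mul0e mule0 adde0.
  by rewrite mul0e mule0 add0e mul1e /Ff /Gf /= Tf_out.
rewrite [in leRHS](_ : (fun z => _ * Gf q bh z) = fun z =>
  (\1_Theta z.1)%:E * ((\1_(Bset q g bh) z.2)%:E * Gf q bh z) +
  (\1_Theta z.1)%:E * ((\1_(~` Bset q g bh) z.2)%:E * Gf q bh z)); last first.
  apply/funext => -[b y] /=; rewrite [X in _ = _ * (X%:E * _) + _]indicE.
  rewrite [X in _ = _ + _ * (X%:E * _)]indicE in_setC.
  by case: (boolP (y \in Bset q g bh)) => hy /=; rewrite ?mul1e ?mul0e ?mule0 ?adde0 ?add0e.
apply: IIDle.
- by apply: IBf_ge0 => z; exact: lqq_ge0.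
- by apply: mIBf => //; exact: (@mfst R p dX X (lqq q) ml).
- by apply: IBf_ge0; exact: (@Gf_ge0 R p dX X q bh).
- by apply: mIBf => //; [exact: measurableC | exact: (mGf q mbh)].
- by apply: IBf_ge0; exact: (@Gf_ge0 R p dX X q bh).
- by apply: mIBf => //; exact: (mGf q mbh).
- exact: (CL mTheta hpi hq hg mbh).
Qed.


End Final.



Section Final2.
Context (R : realType) (p : nat) (dX : measure_display) (X : measurableType dX)
  (Theta : set (p.-tuple R)) (mTheta : measurable Theta)
  (P : R.-pker (p.-tuple R) ~> X) (pi : probability (p.-tuple R) R)
  (hpi : 0%:E < pi Theta) (q : R) (hq : (1 <= q)%R)
  (g : X -> \bar R) (hg : is_cond_exp_betaA Theta P pi q g)
  (bh : X -> p.-tuple R) (mbh : measurable_fun setT bh).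

Lemma Theta_n0 : exists b, Theta b.
Proof.
apply/set0P; apply/negP => /eqP e; move: hpi; rewrite e measure0.
by rewrite ltxx.
Qed.

Lemma F_risk : II P pi (fun z => (\1_Theta z.1)%:E * Gf q bh z) <=
  ereal_sup [set \int[P b]_y lqq q (vsub (bh y) b) | b in Theta].
Proof.
set M := ereal_sup _.
have [b0 hb0] := Theta_n0.
have M0 : 0 <= M.
  have h0 : \int[P b0]_y lqq q (vsub (bh y) b0) <= M.
    by apply: ereal_sup_ubound; exists b0.
  apply: le_trans h0; apply: integral_ge0 => y _; exact: lqq_ge0.
have pt b : \int[P b]_y ((\1_Theta b)%:E * Gf q bh (b, y)) <= M.
  rewrite indicE /=; case: (boolP (b \in Theta)) => hb.
    rewrite (eq_integral (fun y => lqq q (vsub (bh y) b))); last first.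
      by move=> y _; rewrite mul1e.
    by apply: ereal_sup_ubound; exists b => //; exact/set_mem.
  by rewrite (eq_integral (fun _ => 0)) ?integral0 // => y _; rewrite mul0e.
move: M0 pt; case: M => [m| |] // m0 pt; last by rewrite leey.
have nn : forall b, [set: p.-tuple R] b ->
    0 <= \int[P b]_y ((\1_Theta b)%:E * Gf q bh (b, y)).
  by move=> b _; apply: integral_ge0 => y _; apply: mule_ge0;
      [rewrite lee_fin | exact: lqq_ge0].
have mf : measurable_fun setT (fun b => \int[P b]_y ((\1_Theta b)%:E * Gf q bh (b, y))).
  apply: (mII P (f := fun z => (\1_Theta z.1)%:E * Gf q bh z)).
    by move=> z; apply: mule_ge0; [rewrite lee_fin | exact: lqq_ge0].
  by apply: mM; [exact: (mfst (mindE mTheta)) | exact: (mGf q mbh)].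
have := @ge0_le_integral _ _ _ pi setT measurableT _ (cst m%:E) nn mf (measurable_cst _)
  (fun b _ => pt b).
rewrite integral_cst // [X in _ * X](_ : _ = 1) ?mule1 //; last exact: probability_setT.
Qed.

Lemma main_bound :
  II P pi (Ff q g bh) <=
  ereal_sup [set \int[P b]_y lqq q (vsub (bh y) b) | b in Theta] +
  (CC q)%:E * II P pi (fun z => (g z.2 + lqq q z.1) * (\1_(~` Theta) z.1)%:E).
Proof.
have mF := @mFf R p dX X Theta P pi q g hg bh mbh.
have F0 : forall z, 0 <= Ff q g bh z by move=> z; exact: lqq_ge0.
rewrite (_ : Ff q g bh = fun z => (\1_Theta z.1)%:E * Ff q g bh z +
   (\1_(~` Theta) z.1)%:E * Ff q g bh z); last first.
  apply/funext => -[b y] /=; rewrite !indicE in_setC.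
  by case: (b \in Theta) => /=; rewrite ?mul1e ?mul0e ?adde0 ?add0e.
rewrite IID //; last 4 first.
- by move=> z; apply: mule_ge0; [rewrite lee_fin | exact: F0].
- by apply: mM => //; exact: (mfst (mindE mTheta)).
- by move=> z; apply: mule_ge0; [rewrite lee_fin | exact: F0].
- by apply: mM => //; exact: (mfst (mindE (measurableC mTheta))).
apply: leeD.
- by apply: (le_trans (F1_le mTheta hpi hq hg mbh)); exact: F_risk.
- rewrite -IIZ; last 3 first.
  + by apply: ltW; rewrite /CC mulr_gt0 // ?mulr_gt0 // cq_gt0.
  + move=> z; apply: mule_ge0; last by rewrite lee_fin.
    by apply: adde_ge0; [exact: (g0 hg) | exact: lqq_ge0].
  + apply: mM; last exact: (mfst (mindE (measurableC mTheta))).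
    apply: mD; [exact: (msnd (mg hg)) | exact: (mfst (@mlqq R p q))].
  apply: IIle.
  + by move=> z; apply: mule_ge0; [rewrite lee_fin | exact: F0].
  + by apply: mM => //; exact: (mfst (mindE (measurableC mTheta))).
  + apply: measurable_funeM; apply: mM; last exact: (mfst (mindE (measurableC mTheta))).
    apply: mD; [exact: (msnd (mg hg)) | exact: (mfst (@mlqq R p q))].
  + by move=> [b y]; exact: (F2_pt hq hg).
Qed.

End Final2.

Unset Implicit Arguments. Set Strict Implicit.


Theorem theorem1 (R : realType) (p : nat) (hp : (1 <= p)%N)
  (s : nat) (hs : (s < p)%N) (Theta : set (p.-tuple R)) (mTheta : measurable Theta)
  (dX : measure_display) (X : measurableType dX)
  (P : R.-pker (p.-tuple R) ~> X)
  (q : R) (hq : (1 <= q)%R)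
  (pi : probability (p.-tuple R) R) (hpi : 0%:E < pi Theta) :
  exists C : R, (0 < C)%R /\
  forall g : X -> \bar R, is_cond_exp_betaA Theta P pi q g ->
    ereal_inf [set ereal_sup [set \int[P b]_y lqq q (vsub (bh y) b) | b in Theta]
              | bh in @estimators R p dX X]
    >=
    ereal_inf [set \int[pi]_b \int[P b]_y
                    (\sum_(j < p) (`| tnth (T y) j - tnth b j | `^ q)%:E)
              | T in @estimators R p dX X]
    - C%:E * \int[pi]_b \int[P b]_y ((g y + lqq q b) * (\1_(~` Theta) b)%:E).
Proof.
exists (CC q); split; first by rewrite /CC mulr_gt0 // ?mulr_gt0 // cq_gt0.
move=> g hg.
apply: le_ereal_inf_tmp => _ [bh mbh <-].
set M := ereal_sup _.
set Rem := \int[pi]_b _.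
have Rem0 : 0 <= Rem.
  apply: integral_ge0 => b _; apply: integral_ge0 => y _.
  apply: mule_ge0; last by rewrite lee_fin.
  by apply: adde_ge0; [exact: (g0 hg) | exact: lqq_ge0].
have [Remoo|Remfin] : Rem = +oo \/ Rem \is a fin_num.
  by rewrite ge0_fin_numE // ltey; case: (Rem =P +oo) => h; [left | right; apply/eqP].
- rewrite Remoo gt0_muley ?lte_fin; last by rewrite /CC mulr_gt0 // ?mulr_gt0 // cq_gt0.
  by case: (ereal_inf _) => [x| |] /=; rewrite ?leNye.
- rewrite leeBlDr; last by rewrite fin_numM.
  apply: (le_trans (y := II P pi (Ff q g bh))).
    apply: ereal_inf_lbound; exists (Tf q g bh).
      exact: (mTf hg mbh).
    rewrite /II; apply: eq_integral => b _; apply: eq_integral => y _.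
    rewrite /Ff /lqq sumEFin; congr EFin; apply: eq_bigr => j _.
    by rewrite /= [tnth (vsub _ _) j]tnth_mktuple.
  exact: (main_bound mTheta hpi hq hg mbh).
Qed.
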